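(* In the setting of the context, consider a Case 3 spacetime ($\partial_v r_-<0$). Radially outgoing null geodesics initially located between the inner and outer AHs, or on the inner AH, never intersect the inner AH at any later time.
   Context: Spherically symmetric spacetime $ds^2=-f(v,r)A(v,r)^2dv^2+2A(v,r)\,dr\,dv+r^2d\Omega^2$ with $A>0$, $f,A\to1$ as $r\to\infty$, $f(v,0)=1$, $\partial_rf(v,0)=\partial_rA(v,0)=0$; $f(v,\cdot)$ has exactly two zeros $r_+(v)>r_-(v)$ (outer/inner apparent horizons, AHs), $f=F(r-r_+)(r-r_-)$ with $F>0$, and $h=AF>0$. Assumptions: $\partial_v r_+<0$; $r_\pm(v)\to r_c$ as $v\to\infty$; the sign of $\partial_v r_-$ is constant; the $v\to\infty$ limits of $A,F,h$ behave as analytic functions of $r$, so all $\partial_r^n h$ converge as $v\to\infty$. With $x=r-r_c$, $x_\pm=r_\pm-r_c$ and $h$ regarded as a function of $(v,x)$, radially outgoing null geodesics solve $dx/dv=\tfrac12h(v,x)(x-x_+(v))(x-x_-(v))$. *)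

(* Defs.v *)
From Stdlib Require Import Reals Lra.
From Coquelicot Require Import Coquelicot.
Open Scope R_scope.

(* Right-hand side of the radial outgoing null geodesic equation in the
   coordinates x = r - r_c:  dx/dv = 1/2 h(v,x) (x - x_+(v)) (x - x_-(v)). *)
Definition geod_rhs (h : R -> R -> R) (xp xm : R -> R) (v x : R) : R :=
  / 2 * h v x * (x - xp v) * (x - xm v).

(* Main.v *)
Require Import Defs.
From Stdlib Require Import Reals Lra.
From Coquelicot Require Import Coquelicot.
Open Scope R_scope.
Lemma cont_pos (g : R -> R) z l : derivable_pt_lim g z l -> 0 < g z ->
  exists d, 0 < d /\ forall y, Rabs (y - z) < d -> 0 < g y.
Proof.
  intros Hd Hp.
  assert (Hc : continuity_pt g z) by (apply derivable_continuous_pt; exists l; exact Hd).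
  destruct (Hc (g z) Hp) as [a [Ha H]].
  exists a; split; [lra|]. intros y Hy.
  destruct (Req_dec y z) as [->|Hne]; [lra|].
  assert (Hdist : R_dist (g y) (g z) < g z).
  { apply (H y). split; [unfold D_x, no_cond; split; auto|exact Hy]. }
  unfold R_dist in Hdist. apply Rabs_def2 in Hdist. lra.
Qed.

Lemma sign_loc (g : R -> R) z l : derivable_pt_lim g z l -> 0 < l ->
  exists d, 0 < d /\ (forall y, z < y < z + d -> g z < g y)
                  /\ (forall y, z - d < y < z -> g y < g z).
Proof.
  intros Hd Hl.
  destruct (Hd l Hl) as [[d Hdp] H].
  exists d; split; [exact Hdp|split]; intros y Hy.
  - assert (Hh : y - z <> 0) by lra.
    assert (Ha : Rabs (y - z) < d) by (rewrite Rabs_right; lra).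
    specialize (H _ Hh Ha). replace (z + (y - z)) with y in H by ring.
    apply Rabs_def2 in H. destruct H as [_ H].
    assert (0 < (g y - g z) / (y - z)) by lra.
    assert (0 < y - z) by lra.
    assert (0 < (g y - g z)) .
    { replace (g y - g z) with ((g y - g z) / (y - z) * (y - z)) by (field; lra).
      apply Rmult_lt_0_compat; lra. }
    lra.
  - assert (Hh : y - z <> 0) by lra.
    assert (Ha : Rabs (y - z) < d) by (rewrite Rabs_left; lra).
    specialize (H _ Hh Ha). replace (z + (y - z)) with y in H by ring.
    apply Rabs_def2 in H. destruct H as [_ H].
    assert (0 < (g y - g z) / (y - z)) by lra.
    assert (0 < z - y) by lra.
    assert (0 < (g z - g y)) .
    { replace (g z - g y) with ((g y - g z) / (y - z) * (z - y)) by (field; lra).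
      apply Rmult_lt_0_compat; lra. }
    lra.
Qed.
Theorem lemma6
  (h : R -> R -> R) (xp xm : R -> R)
  (* standing assumptions of the context, in the x = r - r_c coordinates *)
  (Hh_pos : forall v x, 0 < h v x)
  (Hh_cont : forall v x, continuous (fun p : R * R => h (fst p) (snd p)) (v, x))
  (Hh_smooth : forall v n x, ex_derive_n (h v) n x)
  (Hh_lim : forall n x, ex_finite_lim (fun v => Derive_n (h v) n x) p_infty)
  (Hord : forall v, xm v < xp v)
  (Hxp_der : forall v, ex_derive xp v /\ Derive xp v < 0)
  (Hxp_lim : is_lim xp p_infty 0)
  (Hxm_lim : is_lim xm p_infty 0)
  (* Case 3 : the inner apparent horizon shrinks *)
  (Hxm_der : forall v, ex_derive xm v /\ Derive xm v < 0)
  (* a radially outgoing null geodesic x(v), defined for v0 <= v < T *)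
  (x : R -> R) (v0 : R) (T : Rbar)
  (Hode : forall v, v0 <= v -> Rbar_lt v T ->
            is_derive x v (geod_rhs h xp xm v (x v)))
  (* initially between the AHs, or on the inner AH *)
  (Hinit : xm v0 <= x v0 < xp v0) :
  forall v, v0 < v -> Rbar_lt v T -> x v <> xm v.
Proof.
  intros v1 Hv1 HT Heq.
  set (g := fun w => x w - xm w).
  assert (Hder : forall w, v0 <= w -> Rbar_lt w T -> g w = 0 ->
            exists l, derivable_pt_lim g w l /\ 0 < l).
  { intros w Hw HwT Hg. exists (geod_rhs h xp xm w (x w) - Derive xm w).
    split.
    - apply is_derive_Reals. apply (is_derive_minus x xm).
      + exact (Hode w Hw HwT).
      + apply Derive_correct, Hxm_der.
    - unfold g in Hg. unfold geod_rhs.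
      replace (x w - xm w) with 0 by lra. destruct (Hxm_der w). lra. }
  assert (Hderany : forall w, v0 <= w -> Rbar_lt w T ->
            exists l, derivable_pt_lim g w l).
  { intros w Hw HwT. exists (geod_rhs h xp xm w (x w) - Derive xm w).
    apply is_derive_Reals. apply (is_derive_minus x xm).
    + exact (Hode w Hw HwT).
    + apply Derive_correct, Hxm_der. }
  destruct (Hder v1 ltac:(lra) HT ltac:(unfold g; lra)) as [l1 [Hl1 Hl1p]].
  destruct (sign_loc g v1 l1 Hl1 Hl1p) as [d1 [Hd1 [_ Hleft]]].
  assert (Hg1 : g v1 = 0) by (unfold g; lra).
  set (E := fun w => v0 <= w < v1 /\ 0 <= g w).
  assert (HE0 : E v0) by (unfold E, g; lra).
  assert (Hbd : bound E) by (exists v1; intros w [Hw _]; lra).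
  destruct (completeness E Hbd (ex_intro _ v0 HE0)) as [z [Hub Hlub]].
  assert (Hzv0 : v0 <= z) by (apply Hub; exact HE0).
  assert (Hzv1 : z <= v1 - d1).
  { apply Hlub. intros w [Hw Hgw].
    destruct (Rle_lt_dec w (v1 - d1)) as [|Hlt]; [assumption|].
    specialize (Hleft w ltac:(lra)). lra. }
  assert (HzT : Rbar_lt z T).
  { apply Rbar_lt_trans with (Finite v1); [simpl; lra|exact HT]. }
  destruct (Hderany z Hzv0 HzT) as [lz Hlz].
  assert (Hgz : 0 <= g z).
  { destruct (Rle_lt_dec 0 (g z)) as [|Hneg]; [assumption|exfalso].
    set (mg := fun w => - g w).
    assert (Hmg : derivable_pt_lim mg z (- lz)).
    { unfold mg. apply derivable_pt_lim_opp. exact Hlz. }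
    destruct (cont_pos mg z (-lz) Hmg ltac:(unfold mg; lra)) as [d [Hd Hn]].
    assert (Hub2 : is_upper_bound E (z - d)).
    { intros w Hw. destruct (Rle_lt_dec w (z - d)) as [|Hlt]; [assumption|].
      pose proof (Hub w Hw). destruct Hw as [_ Hgw].
      assert (0 < mg w) by (apply Hn; rewrite Rabs_left1; lra).
      unfold mg in *. lra. }
    specialize (Hlub _ Hub2). lra. }
  assert (Hright : exists d, 0 < d /\ forall y, z < y < z + d -> 0 < g y).
  { destruct (Req_dec (g z) 0) as [H0|H0].
    - destruct (Hder z Hzv0 HzT H0) as [l [Hl Hlp]].
      destruct (sign_loc g z l Hl Hlp) as [d [Hd [Hr _]]].
      exists d; split; [lra|]. intros y Hy. specialize (Hr y Hy). lra.
    - destruct (cont_pos g z lz Hlz ltac:(lra)) as [d [Hd Hp]].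
      exists d; split; [lra|]. intros y Hy. apply Hp. rewrite Rabs_right; lra. }
  destruct Hright as [d [Hd Hp]].
  set (y := Rmin (z + d / 2) ((z + v1) / 2)).
  assert (Hy1 : z < y).
  { unfold y. apply Rmin_glb_lt; lra. }
  assert (Hy2 : y <= z + d / 2) by apply Rmin_l.
  assert (Hy3 : y <= (z + v1) / 2) by apply Rmin_r.
  assert (HEy : E y).
  { unfold E. split; [lra|]. left. apply Hp. lra. }
  specialize (Hub y HEy). lra.
Qed.
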